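(* Let $d>K\ge1$, $\mathbf Q\in\mathrm{St}(d,K)$, $\lambda_1>\dots>\lambda_K>0$, $\boldsymbol\Theta=\mathrm{diag}(\sqrt{\lambda_1},\dots,\sqrt{\lambda_K})$, $a_1>\dots>a_K>0$, $\alpha>0$, and $\mathcal A_\alpha(\mathbf X)=\alpha\mathbf X+\mathbf Q\boldsymbol\Theta^2\mathbf Q^\top\mathbf X\,\mathrm{diag}(a_1,\dots,a_K)$. A point $\mathbf X\in\mathrm{St}(d,K)$ is a fixed point of the iteration $\mathbf X^{t+1}\in\mathcal P_{\mathrm{St}}(\mathcal A_\alpha(\mathbf X^t))$ (i.e., $\mathbf X\in\mathcal P_{\mathrm{St}}(\mathcal A_\alpha(\mathbf X))$) if and only if $\mathrm{tr}(\mathbf X^\top\mathcal A_\alpha(\mathbf X))=\|\mathcal A_\alpha(\mathbf X)\|_*$. Furthermore, every such fixed point is a first-order critical point of $\max_{\mathbf X\in\mathrm{St}(d,K)}\mathrm{tr}(\mathbf X^\top\mathbf Q\boldsymbol\Theta^2\mathbf Q^\top\mathbf X\,\mathrm{diag}(a_1,\dots,a_K))$.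
   Context: $\mathrm{St}(d,K)=\{\mathbf X\in\mathbb R^{d\times K}:\mathbf X^\top\mathbf X=\mathbf I_K\}$, viewed as an embedded submanifold of $\mathbb R^{d\times K}$ with the Euclidean metric (critical point = vanishing Riemannian gradient). $\mathcal P_{\mathrm{St}}(\mathbf Y)$ is the set of Frobenius-nearest points of $\mathrm{St}(d,K)$ to $\mathbf Y$. $\|\cdot\|_*$ is the nuclear norm. *)

(* Defs.v *)
From HB Require Import structures.
From mathcomp Require Import all_boot all_order all_algebra.
From mathcomp Require Import all_classical all_reals all_analysis.
Set Implicit Arguments. Unset Strict Implicit. Unset Printing Implicit Defensive.
Import Order.TTheory GRing.Theory Num.Theory.
Import numFieldNormedType.Exports.
Local Open Scope ring_scope.
Local Open Scope classical_set_scope.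

Section Defs.
Variable R : realType.

Definition Stiefel (d K : nat) (X : 'M[R]_(d, K)) : Prop := X^T *m X = 1%:M.

Definition frob (m n : nat) (A : 'M[R]_(m, n)) : R := Num.sqrt (\tr (A^T *m A)).

Definition P_St (d K : nat) (Y : 'M[R]_(d, K)) : set 'M[R]_(d, K) :=
  [set X | Stiefel X /\ forall Z, Stiefel Z -> frob (X - Y) <= frob (Z - Y)].

Definition psd (n : nat) (S : 'M[R]_n) : Prop :=
  S^T = S /\ forall v : 'cV[R]_n, 0 <= (v^T *m S *m v) 0 0.

(* Nuclear norm ||A||_* = tr (A^T A)^{1/2}, the sum of singular values;
   (A^T A)^{1/2} is the (unique) PSD square root of A^T A. *)
Definition nucnorm (m n : nat) (A : 'M[R]_(m, n)) : R :=
  \tr (get [set S : 'M[R]_n | psd S /\ S *m S = A^T *m A]).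

Definition tangent (d K : nat) (X V : 'M[R]_(d, K)) : Prop :=
  X^T *m V + V^T *m X = 0.

Definition is_rgrad (d K : nat) (f : 'M[R]_(d, K) -> R) (X G : 'M[R]_(d, K))
  : Prop :=
  tangent X G /\
  forall V, tangent X V ->
    is_derive (0 : R) (1 : R) (fun t : R => f (X + t *: V)) (\tr (G^T *m V)).

Definition critical_St (d K : nat) (f : 'M[R]_(d, K) -> R) (X : 'M[R]_(d, K))
  : Prop := Stiefel X /\ is_rgrad f X 0.

End Defs.

(* Main.v *)
Require Import Defs.
From HB Require Import structures.
From mathcomp Require Import all_boot all_order all_algebra.
From mathcomp Require Import all_classical all_reals all_analysis.
From mathcomp Require Import complex.
From mathcomp Require Import ring lra.
Set Implicit Arguments. Unset Strict Implicit. Unset Printing Implicit Defensive.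
Import Order.TTheory GRing.Theory Num.Theory.
Import numFieldNormedType.Exports.
Local Open Scope ring_scope.
Local Open Scope classical_set_scope.

Section LA.
Variable R : rcfType.

Lemma quad0 (a b : R) : (forall t, 0 <= t * b + t ^+ 2 * a) -> b = 0.
Proof.
move=> H; apply/eqP; apply/negPn/negP => hb.
have hb2 : 0 < b ^+ 2 by rewrite exprn_even_gt0.
case: (lerP a 0) => ha.
  have := H (- b); nra.
have := H (- b / (2 * a)).
have -> : - b / (2 * a) * b + (- b / (2 * a)) ^+ 2 * a = - (b ^+ 2 / (4 * a)).
  by field; rewrite gt_eqF.
rewrite oppr_ge0 leNgt => /negP; apply.
by apply: divr_gt0 => //; rewrite mulr_gt0.
Qed.
End LA.
Section HH.
Variable R : rcfType.
Implicit Types n : nat.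

Definition dotv n (u v : 'cV[R]_n) : R := (u^T *m v) 0 0.

Lemma dotvE n (u v : 'cV[R]_n) : dotv u v = \sum_i u i 0 * v i 0.
Proof. by rewrite /dotv mxE; apply: eq_bigr => i _; rewrite mxE. Qed.

Lemma dotvC n (u v : 'cV[R]_n) : dotv u v = dotv v u.
Proof. by rewrite !dotvE; apply: eq_bigr => i _; rewrite mulrC. Qed.

Lemma dotv_ge0 n (u : 'cV[R]_n) : 0 <= dotv u u.
Proof. by rewrite dotvE; apply: sumr_ge0 => i _; rewrite -expr2 sqr_ge0. Qed.

Lemma dotv_eq0 n (u : 'cV[R]_n) : dotv u u = 0 -> u = 0.
Proof.
rewrite dotvE => /eqP; rewrite psumr_eq0; last by move=> i _; rewrite -expr2 sqr_ge0.
move=> /allP H; apply/matrixP => i j; rewrite ord1 mxE.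
by have := H i (mem_index_enum _); rewrite -expr2 sqrf_eq0 => /eqP.
Qed.

Lemma dotvBl n (u v w : 'cV[R]_n) : dotv (u - v) w = dotv u w - dotv v w.
Proof. by rewrite !dotvE -sumrB; apply: eq_bigr => i _; rewrite !mxE mulrBl. Qed.

Lemma dotvBr n (u v w : 'cV[R]_n) : dotv w (u - v) = dotv w u - dotv w v.
Proof. by rewrite !(dotvC w) dotvBl. Qed.

Lemma dotvZl n a (u v : 'cV[R]_n) : dotv (a *: u) v = a * dotv u v.
Proof. by rewrite !dotvE mulr_sumr; apply: eq_bigr => i _; rewrite !mxE mulrA. Qed.

Lemma dotvZr n a (u v : 'cV[R]_n) : dotv v (a *: u) = a * dotv v u.
Proof. by rewrite !(dotvC v) dotvZl. Qed.

Lemma mx11E (A : 'M[R]_1) : A = (A 0 0)%:M.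
Proof. exact: mx11_scalar. Qed.

Lemma trTmul n (u v : 'cV[R]_n) : u^T *m v = (dotv u v)%:M.
Proof. exact: mx11_scalar. Qed.

Definition hh n (u : 'cV[R]_n) : 'M[R]_n :=
  1%:M - (2 / dotv u u) *: (u *m u^T).

Lemma hh_sym n (u : 'cV[R]_n) : (hh u)^T = hh u.
Proof. by rewrite /hh linearB /= trmx1 linearZ /= trmx_mul trmxK. Qed.

Lemma hh_sq n (u : 'cV[R]_n) : hh u *m hh u = 1%:M.
Proof.
rewrite /hh mulmxBl mul1mx mulmxBr mulmx1.
rewrite -!scalemxAl -!scalemxAr scalerA.
rewrite mulmxA -[u *m u^T *m u]mulmxA trTmul mul_mx_scalar.
rewrite -scalemxAl scalerA.
idtac.
set s := dotv u u; set P := u *m u^T.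
have [->|s0] := eqVneq s 0.
  by rewrite invr0 mulr0 !mul0r !scale0r !subr0.
rewrite -[2 / s * (2 / s) * s]mulrA mulfVK //.
rewrite mulr_natr -scalerMnl mulr2n; set Q := (2 / s) *: P.
by rewrite opprB addrK subrK.
Qed.

Lemma hh_orth n (u : 'cV[R]_n) : (hh u)^T *m hh u = 1%:M.
Proof. by rewrite hh_sym hh_sq. Qed.

End HH.
Section Eig.

Lemma eig_real (C : numClosedFieldType) n (A : 'M[C]_n) (z : C) (w : 'rV[C]_n) :
  A^T = A -> map_mx Num.conj_op A = A -> w *m A = z *: w -> w != 0 ->
  z \is Num.real.
Proof.
move=> AT Ac wA w0.
pose wc := map_mx Num.conj_op w.
pose s := (w *m A *m wc^T) 0 0.
pose m := (w *m wc^T) 0 0.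
have hs : s = z * m by rewrite /s /m wA -scalemxAl mxE.
have hm : m = \sum_i w 0 i * (w 0 i)^*.
  by rewrite /m mxE; apply: eq_bigr => i _; rewrite !mxE.
have m0 : m != 0.
  rewrite hm; apply/negP => /eqP.
  move/eqP; rewrite psumr_eq0; last by move=> i _; rewrite mul_conjC_ge0.
  move=> /allP H; move/negP: w0; apply; apply/eqP/matrixP => i j.
  by rewrite ord1 mxE; have := H j (mem_index_enum _); rewrite mul_conjC_eq0 => /eqP.
have mr : m^* = m.
  rewrite hm rmorph_sum; apply: eq_bigr => i _; by rewrite rmorphM /= conjCK mulrC.
have hA : forall i j, A i j = A j i.
  by move=> i j; have := congr1 (fun M : 'M[C]_n => M j i) AT; rewrite mxE.
have hAc : forall i j, (A i j)^* = A i j.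
  by move=> i j; have := congr1 (fun M : 'M[C]_n => M i j) Ac; rewrite mxE.
have sE : s = \sum_i \sum_j w 0 i * A i j * (w 0 j)^*.
  rewrite /s -mulmxA mxE; apply: eq_bigr => i _; rewrite !mxE mulr_sumr.
  by apply: eq_bigr => j _; rewrite !mxE mulrA.
have sr : s^* = s.
  rewrite sE rmorph_sum exchange_big /=; apply: eq_bigr => i _.
  rewrite rmorph_sum; apply: eq_bigr => j _ /=.
  by rewrite !rmorphM /= conjCK hAc hA mulrC [(w 0 i)^* * _]mulrC mulrA.
have hz : z = s / m by rewrite hs mulfK.
by rewrite CrealE hz fmorph_div /= sr mr.
Qed.
End Eig.
Section RealEig.
Variable R : rcfType.
Local Notation C := (complex.complex R).

Lemma sym_eigen n (B : 'M[R]_n.+1) : B^T = B ->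
  exists k (v : 'rV[R]_n.+1), v != 0 /\ v *m B = k *: v.
Proof.
move=> BT.
pose f := complex.real_complex R.
pose Bc := map_mx f B.
have [z ez] := @eigenvalue_closed _ _ Bc (ltn0Sn n).
have zr : z \is Num.real.
  move/eigenvalueP: ez => [w wB w0].
  apply: (eig_real _ _ wB w0).
    by rewrite /Bc map_trmx BT.
  rewrite /Bc -map_mx_comp; apply/matrixP => i j; rewrite !mxE /=.
  by apply: conj_Creal; rewrite complex_real.
have hz := complex.RRe_real zr.
have : eigenvalue B (complex.Re z).
  rewrite eigenvalue_root_char -(mapf_root f) map_char_poly -eigenvalue_root_char -/Bc.
  move: ez; rewrite -{1}hz.
  by [].
by move/eigenvalueP => [v vB v0]; exists (complex.Re z), v.
Qed.
End RealEig.
Section Spec.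
Variable R : rcfType.

Lemma hh_e0 n (u : 'cV[R]_n.+1) : dotv u u = 1 ->
  hh (u - delta_mx 0 0) *m delta_mx 0 0 = u.
Proof.
move=> u1.
set e := delta_mx 0 0 : 'cV[R]_n.+1.
have ee : dotv e e = 1.
  rewrite dotvE (bigD1 0) //= big1 => [|i /negPf i0]; rewrite !mxE ?i0 /= ?mulr0 //.
  by rewrite mulr1 addr0.
have ue : dotv u e = u 0 0.
  by rewrite dotvE (bigD1 0) //= big1 => [|i /negPf i0]; rewrite !mxE ?i0 /= ?mulr0 ?addr0 ?mulr1.
set w := u - e.
have ww : dotv w w = 2 - 2 * u 0 0.
  by rewrite /w !dotvBl !dotvBr u1 ee (dotvC e) ue; ring.
have we : dotv w e = u 0 0 - 1.
  by rewrite /w dotvBl ue ee.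
rewrite /hh mulmxBl mul1mx -scalemxAl -mulmxA trTmul mul_mx_scalar scalerA.
have [w0|w0] := eqVneq (dotv w w) 0.
  have wz : w = 0 := dotv_eq0 w0.
  rewrite wz scaler0 subr0; apply/eqP; rewrite eq_sym -subr_eq0.
  by rewrite -/w wz.
rewrite ww we.
have h1 : u 0 0 - 1 != 0 by apply: contraNneq w0 => h; rewrite ww; lra.
have -> : 2 / (2 - 2 * u 0 0) * (u 0 0 - 1) = -1.
  by field; apply: contraNneq h1 => h; lra.
by rewrite scaleN1r opprK /w addrC subrK.
Qed.

End Spec.
Section Spec2.
Variable R : rcfType.

Lemma diag_mx11 (k : R) : diag_mx (k%:M : 'rV[R]_1) = k%:M.
Proof. by apply/matrixP => i j; rewrite !ord1 !mxE. Qed.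

Lemma spectral n (B : 'M[R]_n) : B^T = B ->
  exists (V : 'M[R]_n) (s : 'rV[R]_n), V^T *m V = 1%:M /\ B = V *m diag_mx s *m V^T.
Proof.
elim: n B => [|n IH] B BT.
  exists 1%:M, 0; split; first by rewrite trmx1 mulmx1.
  by apply/matrixP => [[]].
have [k [v [v0 vB]]] := sym_eigen BT.
have vv : 0 < dotv v^T v^T.
  rewrite lt_def dotv_ge0 andbT; apply: contraNneq v0 => h.
  by have := dotv_eq0 h => /(congr1 trmx); rewrite trmxK trmx0 => ->.
pose u := (Num.sqrt (dotv v^T v^T))^-1 *: v^T.
have u1 : dotv u u = 1.
  rewrite /u dotvZl dotvZr mulrA -expr2 exprVn sqr_sqrtr ?mulVf //; first by rewrite gt_eqF.
  exact: ltW.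
have Bu : B *m u = k *: u.
  have : (v *m B)^T = (k *: v)^T by rewrite vB.
  rewrite trmx_mul BT linearZ /= => h.
  by rewrite /u -scalemxAr h scalerA mulrC -scalerA.
set e := delta_mx 0 0 : 'cV[R]_n.+1.
set H := hh (u - e).
have He : H *m e = u := hh_e0 u1.
have Hu : H *m u = e by rewrite -He mulmxA hh_sq mul1mx.
have [A hA] : {A : 'M[R]_n.+1 | A = H *m B *m H} by exists (H *m B *m H).
have AT : A^T = A by rewrite hA !trmx_mul hh_sym BT mulmxA.
have Ae : A *m e = k *: e by rewrite hA -mulmxA He -mulmxA Bu -scalemxAr Hu.
have Acol : forall i, A i 0 = k * e i 0.
  by move=> i; have := congr1 (fun M : 'cV[R]_n.+1 => M i 0) Ae; rewrite -colE !mxE.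
pose A' := A : 'M[R]_(1 + n).
have hdl : dlsubmx A' = 0.
  apply/matrixP => i j; rewrite !mxE [j]ord1 lshift0 Acol !mxE /=.
  by rewrite mulr0.
have hur : ursubmx A' = 0 by rewrite /A' -AT -trmx_dlsub hdl trmx0.
have hul : ulsubmx A' = k%:M.
  apply/matrixP => i j; rewrite !ord1 !mxE lshift0 Acol !mxE /=.
  by rewrite mulr1.
set B2 := drsubmx A'.
have B2T : B2^T = B2 by rewrite /B2 trmx_drsub AT.
have [V2 [s2 [V2o B2E]]] := IH B2 B2T.
pose X : 'M[R]_(1 + n) := block_mx 1%:M 0 0 V2.
pose s : 'rV[R]_(1 + n) := row_mx k%:M s2.
have XoT : X^T *m X = 1%:M.
  rewrite /X tr_block_mx !trmx0 trmx1.
  rewrite mulmx_block !(mul0mx, mulmx0, mul1mx, mulmx1, addr0, add0r) V2o.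
  by rewrite -scalar_mx_block.
have XDX : X *m diag_mx s *m X^T = A'.
  rewrite /X /s tr_block_mx !trmx0 trmx1 diag_mx_row diag_mx11.
  rewrite !mulmx_block !(mul0mx, mulmx0, mul1mx, mulmx1, addr0, add0r).
  by rewrite -B2E -hul -hur -hdl submxK.
pose X' : 'M[R]_n.+1 := X.
pose s' : 'rV[R]_n.+1 := s.
have XoT' : X'^T *m X' = 1%:M := XoT.
have XDX' : X' *m diag_mx s' *m X'^T = A := XDX.
exists (H *m X'), s'; split.
  by rewrite trmx_mul mulmxA -(mulmxA _ H^T) hh_orth mulmx1 XoT'.
rewrite trmx_mul hh_sym !mulmxA -(mulmxA H) -(mulmxA H) XDX' hA.
by rewrite !mulmxA hh_sq mul1mx -mulmxA hh_sq mulmx1.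
Qed.

End Spec2.
Section PSD.
Variable R : realType.

Lemma dotvDl n (u v w : 'cV[R]_n) : dotv (u + v) w = dotv u w + dotv v w.
Proof. by rewrite !dotvE -big_split; apply: eq_bigr => i _; rewrite !mxE mulrDl. Qed.

Lemma dotvDr n (u v w : 'cV[R]_n) : dotv w (u + v) = dotv w u + dotv w v.
Proof. by rewrite !(dotvC w) dotvDl. Qed.

Lemma dotv_mx m n (A : 'M[R]_(m, n)) (x : 'cV_m) (y : 'cV_n) :
  dotv x (A *m y) = dotv (A^T *m x) y.
Proof.
rewrite /dotv [in RHS]trmx_mul trmxK mulmxA.
by [].
Qed.

Lemma colcol m n p (A : 'M[R]_(m, n)) (B : 'M[R]_(m, p)) i j :
  (A^T *m B) i j = dotv (col i A) (col j B).
Proof. by rewrite mxE dotvE; apply: eq_bigr => k _; rewrite !mxE. Qed.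

Lemma col_mul m n p (A : 'M[R]_(m, n)) (B : 'M[R]_(n, p)) j :
  col j (A *m B) = A *m col j B.
Proof. by rewrite !colE mulmxA. Qed.

Lemma qf_psd n (S : 'M[R]_n) x : psd S -> 0 <= dotv x (S *m x).
Proof. by case=> _ H; rewrite /dotv mulmxA; exact: H. Qed.

Lemma psd_null n (S : 'M[R]_n) x : psd S -> dotv x (S *m x) = 0 -> S *m x = 0.
Proof.
move=> hS hx; have [ST _] := hS.
have key : forall y, dotv y (S *m x) = 0.
  move=> y.
  have : 2 * dotv y (S *m x) = 0.
    apply: (@quad0 _ (dotv y (S *m y))) => t.
    have := qf_psd (x + t *: y) hS.
    have -> : dotv (x + t *: y) (S *m (x + t *: y)) =
        t * (2 * dotv y (S *m x)) + t ^+ 2 * dotv y (S *m y).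
      rewrite mulmxDr -scalemxAr dotvDl !dotvDr !dotvZl !dotvZr hx.
      rewrite (dotv_mx S x y) ST (dotvC (S *m x) y); ring.
    by [].
  by move/eqP; rewrite mulf_eq0 pnatr_eq0 => /eqP.
by apply: dotv_eq0; apply: key.
Qed.

Lemma psd_col n (S : 'M[R]_n) (D : 'M[R]_n) :
  psd S -> \tr (D^T *m S *m D) = 0 -> S *m D = 0.
Proof.
move=> hS htr.
have e : forall i, (D^T *m S *m D) i i = dotv (col i D) (S *m col i D).
  by move=> i; rewrite -mulmxA colcol col_mul.
have : \sum_i dotv (col i D) (S *m col i D) = 0.
  by apply: etrans htr; apply: eq_bigr => i _; rewrite e.
move/eqP; rewrite psumr_eq0; last by move=> i _; exact: qf_psd.
move=> /allP H; apply/matrixP => i j.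
have := psd_null hS (eqP (H j (mem_index_enum _))).
move=> /(congr1 (fun M : 'cV[R]_n => M i 0)); rewrite -col_mul !mxE => ->.
by [].
Qed.

Lemma tr_psd_ge0 n (D S : 'M[R]_n) : psd S -> 0 <= \tr (D^T *m S *m D).
Proof.
move=> hS; rewrite /mxtrace; apply: sumr_ge0 => i _.
by rewrite -mulmxA colcol col_mul; exact: qf_psd.
Qed.

Lemma psd_sqrt_uniq n (S C : 'M[R]_n) :
  psd S -> psd C -> S *m S = C *m C -> S = C.
Proof.
move=> hS hC hSC.
have [ST _] := hS; have [CT _] := hC.
pose D := S - C.
have DT : D^T = D by rewrite /D linearB /= ST CT.
have h0 : S *m D + D *m C = 0.
  by rewrite /D mulmxBr mulmxBl hSC addrA subrK subrr.
have htr : \tr (D^T *m S *m D) + \tr (D^T *m C *m D) = 0.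
  rewrite DT -!mulmxA (mulmxA D C D) (mxtrace_mulC (D *m C) D) -mxtraceD.
  by rewrite -mulmxDr h0 mulmx0 mxtrace0.
have t1 := tr_psd_ge0 D hS; have t2 := tr_psd_ge0 D hC.
have hSD : S *m D = 0 by apply: (psd_col hS); lra.
have hCD : C *m D = 0 by apply: (psd_col hC); lra.
have DD : D^T *m D = 0 by rewrite DT {1}/D mulmxBl hSD hCD subrr.
apply/eqP; rewrite -subr_eq0 -/D; apply/eqP/matrixP => i j.
have := congr1 (fun M : 'M[R]_n => M j j) DD; rewrite colcol mxE => /dotv_eq0.
by move/(congr1 (fun M : 'cV[R]_n => M i 0)); rewrite !mxE.
Qed.

End PSD.
Section Sqrt.
Variable R : realType.

Lemma diag_qf n (w : 'cV[R]_n) (d : 'rV[R]_n) :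
  (w^T *m diag_mx d *m w) 0 0 = \sum_i w i 0 ^+ 2 * d 0 i.
Proof.
rewrite mxE; apply: eq_bigr => i _; rewrite mul_mx_diag !mxE.
by rewrite expr2 mulrAC.
Qed.

Lemma orth_diag n (V : 'M[R]_n) (s : 'rV[R]_n) B :
  V^T *m V = 1%:M -> B = V *m diag_mx s *m V^T -> V^T *m B *m V = diag_mx s.
Proof.
move=> Vo ->.
by rewrite !mulmxA Vo mul1mx -mulmxA Vo mulmx1.
Qed.

Lemma psd_sqrt_ex m n (Y : 'M[R]_(m, n)) :
  exists S : 'M[R]_n, psd S /\ S *m S = Y^T *m Y.
Proof.
have BT : (Y^T *m Y)^T = Y^T *m Y by rewrite trmx_mul trmxK.
have [V [s [Vo BE]]] := spectral BT.
have VVT : V *m V^T = 1%:M := mulmx1C Vo.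
have s0 : forall i, 0 <= s 0 i.
  move=> i; have := congr1 (fun M : 'M[R]_n => M i i) (orth_diag Vo BE).
  rewrite [in RHS]mxE eqxx mulr1n => <-.
  have -> : V^T *m (Y^T *m Y) *m V = (Y *m V)^T *m (Y *m V) by rewrite trmx_mul !mulmxA.
  by rewrite colcol dotv_ge0.
pose r := \row_i Num.sqrt (s 0 i).
exists (V *m diag_mx r *m V^T); split; [split|].
- by rewrite !trmx_mul trmxK tr_diag_mx mulmxA.
- move=> v.
  have -> : v^T *m (V *m diag_mx r *m V^T) *m v = (V^T *m v)^T *m diag_mx r *m (V^T *m v).
    by rewrite trmx_mul trmxK !mulmxA.
  rewrite diag_qf; apply: sumr_ge0 => i _; rewrite [r 0 i]mxE.
  by rewrite mulr_ge0 ?sqr_ge0 ?sqrtr_ge0.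
- rewrite BE -!mulmxA; congr (_ *m _); rewrite !mulmxA -(mulmxA _ V^T) Vo mulmx1.
  congr (_ *m _); rewrite mulmx_diag; congr diag_mx; apply/rowP => i; rewrite !mxE.
  by rewrite -expr2 sqr_sqrtr.
Qed.

Lemma cs_le n (z y : 'cV[R]_n) (s : R) :
  dotv z z = 1 -> dotv y y = s ^+ 2 -> 0 <= s -> dotv z y <= s.
Proof.
move=> zz yy s0.
have [se|sn0] := eqVneq s 0.
  move: yy; rewrite se expr2 mulr0 => /dotv_eq0 ->.
  by rewrite dotvE big1 // => i _; rewrite mxE mulr0.
have sp : 0 < s by rewrite lt_def sn0.
have h := dotv_ge0 (s *: z - y).
move: h; rewrite !dotvBl !dotvBr !dotvZl !dotvZr zz yy (dotvC y z).
nra.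
Qed.

Lemma tr_le_nuc d K (Y Z : 'M[R]_(d, K)) (S : 'M[R]_K) :
  psd S -> S *m S = Y^T *m Y -> Z^T *m Z = 1%:M -> \tr (Z^T *m Y) <= \tr S.
Proof.
move=> hS hSY hZ.
have [ST _] := hS.
have [V [s [Vo SE]]] := spectral ST.
have VVT : V *m V^T = 1%:M := mulmx1C Vo.
have VSV := orth_diag Vo SE.
have s0 : forall i, 0 <= s 0 i.
  move=> i; have := congr1 (fun M : 'M[R]_K => M i i) VSV.
  rewrite [in RHS]mxE eqxx mulr1n => <-.
  by rewrite -mulmxA colcol col_mul qf_psd.
pose Y' := Y *m V; pose Z' := Z *m V.
have hY : Y'^T *m Y' = diag_mx s *m diag_mx s.
  rewrite /Y' trmx_mul -!mulmxA (mulmxA Y^T) -hSY SE.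
  by rewrite !mulmxA Vo mul1mx -(mulmxA (diag_mx s)) Vo mulmx1 -mulmxA Vo mulmx1.
have hZ' : Z'^T *m Z' = 1%:M.
  by rewrite /Z' trmx_mul -mulmxA (mulmxA Z^T) hZ mul1mx Vo.
have -> : \tr (Z^T *m Y) = \tr (Z'^T *m Y').
  rewrite /Z' /Y' trmx_mul -!mulmxA [in RHS]mxtrace_mulC -!mulmxA VVT mulmx1.
  by [].
have -> : \tr S = \sum_i s 0 i.
  by rewrite SE mxtrace_mulC mulmxA Vo mul1mx mxtrace_diag.
rewrite /mxtrace; apply: ler_sum => i _.
rewrite colcol; apply: cs_le (s0 i).
  by have := congr1 (fun M : 'M[R]_K => M i i) hZ'; rewrite colcol mxE eqxx mulr1n.
have := congr1 (fun M : 'M[R]_K => M i i) hY; rewrite colcol => ->.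
by rewrite mulmx_diag !mxE eqxx mulr1n expr2.
Qed.

End Sqrt.
Section Max.
Variable R : realType.

Lemma tr_rank1 n (u v : 'cV[R]_n) (C : 'M[R]_n) :
  \tr (u *m v^T *m C) = dotv v (C *m u).
Proof. by rewrite -mulmxA mxtrace_mulC trace_mx11 /dotv mulmxA. Qed.

Lemma tr_hh n (u : 'cV[R]_n) (C : 'M[R]_n) :
  \tr (hh u *m C) = \tr C - (2 / dotv u u) * dotv u (C *m u).
Proof.
by rewrite /hh mulmxBl mul1mx -scalemxAl linearB /= mxtraceZ tr_rank1.
Qed.

Lemma hh_apply n (v x : 'cV[R]_n) :
  hh v *m x = x - (2 / dotv v v * dotv v x) *: v.
Proof.
by rewrite /hh mulmxBl mul1mx -scalemxAl -mulmxA trTmul mul_mx_scalar scalerA.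
Qed.

Lemma tr_hh2 n (u v : 'cV[R]_n) (C : 'M[R]_n) :
  \tr (hh u *m hh v *m C) = \tr C - (2 / dotv u u) * dotv u (C *m u)
     - (2 / dotv v v) * dotv v (C *m v)
     + (2 / dotv u u) * (2 / dotv v v) * (dotv u v * dotv v (C *m u)).
Proof.
rewrite -mulmxA tr_hh tr_hh -mulmxA hh_apply dotvBr dotvZr.
ring.
Qed.

Lemma dotv_delta n (i : 'I_n) (x : 'cV[R]_n) : dotv (delta_mx i 0) x = x i 0.
Proof.
rewrite dotvE (bigD1 i) //= big1 => [|j /negPf ji]; rewrite !mxE ?ji ?mul0r //.
by rewrite !eqxx mul1r addr0.
Qed.

Lemma dotv_deltaE n (i j : 'I_n) (C : 'M[R]_n) :
  dotv (delta_mx i 0) (C *m delta_mx j 0) = C i j.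
Proof. by rewrite dotv_delta -colE mxE. Qed.

End Max.
Section Max2.
Variable R : realType.

Lemma tr_gram_ge0 m n (A : 'M[R]_(m, n)) : 0 <= \tr (A^T *m A).
Proof. by rewrite /mxtrace; apply: sumr_ge0 => i _; rewrite colcol dotv_ge0. Qed.

Lemma tr_expand d K (Z Y : 'M[R]_(d, K)) : Z^T *m Z = 1%:M ->
  \tr ((Z - Y)^T *m (Z - Y)) = K%:R - 2 * \tr (Z^T *m Y) + \tr (Y^T *m Y).
Proof.
move=> hZ.
rewrite [(Z - Y)^T]linearB /= !mulmxBl !mulmxBr hZ !linearB /= mxtrace1.
have -> : \tr (Y^T *m Z) = \tr (Z^T *m Y) by rewrite -mxtrace_tr trmx_mul trmxK.
ring.
Qed.

Lemma frob_le d K (X Z Y : 'M[R]_(d, K)) : Stiefel X -> Stiefel Z ->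
  (frob (X - Y) <= frob (Z - Y)) = (\tr (Z^T *m Y) <= \tr (X^T *m Y)).
Proof.
rewrite /Stiefel /frob => hX hZ.
rewrite ler_sqrt ?tr_gram_ge0 // !tr_expand //.
by apply/idP/idP => h; lra.
Qed.

End Max2.
Section Max3.
Variable R : realType.

Lemma max_struct d K (X Y : 'M[R]_(d, K)) : X^T *m X = 1%:M ->
  (forall Z : 'M[R]_(d, K), Z^T *m Z = 1%:M -> \tr (Z^T *m Y) <= \tr (X^T *m Y)) ->
  Y = X *m (X^T *m Y) /\ psd (X^T *m Y).
Proof.
move=> hX hmax.
have qN : forall u : 'cV[R]_d, 0 <= dotv u (Y *m X^T *m u).
  move=> u.
  have hZ : (hh u *m X)^T *m (hh u *m X) = 1%:M.
    by rewrite trmx_mul mulmxA -(mulmxA X^T) hh_orth mulmx1 hX.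
  have := hmax _ hZ.
  have -> : \tr ((hh u *m X)^T *m Y) = \tr (hh u *m (Y *m X^T)).
    by rewrite trmx_mul hh_sym -mulmxA mxtrace_mulC -mulmxA.
  rewrite tr_hh.
  rewrite [\tr (Y *m X^T)]mxtrace_mulC.
  have [u0|un0] := eqVneq (dotv u u) 0.
    by move=> _; rewrite (dotv_eq0 u0) dotvE big1 // => i _; rewrite mxE mul0r.
  have c0 : 0 < 2 / dotv u u by rewrite divr_gt0 // lt_def un0 dotv_ge0.
  move=> h.
  have : 0 <= 2 / dotv u u * dotv u (Y *m X^T *m u) by lra.
  by rewrite pmulr_rge0.
have kerY : forall p : 'cV[R]_d, X^T *m p = 0 -> Y^T *m p = 0.
  move=> p hp.
  have key : forall w : 'cV[R]_K, dotv p (Y *m w) = 0.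
    move=> w; apply: (@quad0 _ (dotv (X *m w) (Y *m w))) => t.
    have := qN (p + t *: (X *m w)).
    have e1 : Y *m X^T *m p = 0 by rewrite -mulmxA hp mulmx0.
    have e2 : Y *m X^T *m (X *m w) = Y *m w by rewrite -mulmxA (mulmxA X^T) hX mul1mx.
    rewrite mulmxDr -scalemxAr e1 e2 add0r dotvDl !dotvZl !dotvZr.
    by rewrite expr2 mulrA.
  by apply: dotv_eq0; rewrite -dotv_mx; exact: key.
have hY : Y = X *m (X^T *m Y).
  pose P := 1%:M - X *m X^T.
  have XP : X^T *m P = 0 by rewrite /P mulmxBr mulmx1 mulmxA hX mul1mx subrr.
  have YP : Y^T *m P = 0.
    apply/matrixP => i j.
    have h : X^T *m col j P = 0.
      by rewrite -col_mul XP; apply/matrixP => a b; rewrite !mxE.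
    have := congr1 (fun M : 'cV[R]_K => M i 0) (kerY _ h).
    by rewrite -col_mul !mxE.
  have : (Y^T *m P)^T = 0 by rewrite YP trmx0.
  rewrite trmx_mul trmxK /P linearB /= trmx1 trmx_mul trmxK mulmxBl mul1mx.
  by move/eqP; rewrite subr_eq0 => /eqP {1}->; rewrite mulmxA.
split => //.
set C := X^T *m Y.
have qC : forall u : 'cV[R]_K, 0 <= dotv u (C *m u).
  move=> u.
  have hZ : (X *m hh u)^T *m (X *m hh u) = 1%:M.
    by rewrite trmx_mul -mulmxA (mulmxA X^T) hX mul1mx hh_orth.
  have := hmax _ hZ.
  rewrite trmx_mul hh_sym -mulmxA tr_hh -/C.
  have [u0|un0] := eqVneq (dotv u u) 0.
    by move=> _; rewrite (dotv_eq0 u0) dotvE big1 // => i _; rewrite mxE mul0r.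
  have c0 : 0 < 2 / dotv u u by rewrite divr_gt0 // lt_def un0 dotv_ge0.
  move=> h.
  have : 0 <= 2 / dotv u u * dotv u (C *m u) by lra.
  by rewrite pmulr_rge0.
have CT : C^T = C.
  apply/matrixP => i j; rewrite mxE.
  have [->|ij] := eqVneq i j; first by [].
  apply/eqP; rewrite eq_sym -subr_eq0; apply/eqP.
  apply: (@quad0 _ (C i i + C j j)) => t.
  pose u := delta_mx i 0 : 'cV[R]_K; pose e := delta_mx j 0 : 'cV[R]_K.
  pose v := u + t *: e.
  have hZ : (X *m (hh v *m hh u))^T *m (X *m (hh v *m hh u)) = 1%:M.
    rewrite trmx_mul -mulmxA (mulmxA X^T) hX mul1mx trmx_mul !hh_sym.
    by rewrite mulmxA -(mulmxA (hh u)) hh_sq mulmx1 hh_sq.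
  have := hmax _ hZ.
  rewrite trmx_mul -mulmxA trmx_mul !hh_sym tr_hh2 -/C.
  have ji : j != i by rewrite eq_sym.
  have uu : dotv u u = 1 by rewrite dotv_delta mxE !eqxx.
  have ue : dotv u e = 0 by rewrite dotv_delta mxE (negPf ij).
  have ee : dotv e e = 1 by rewrite dotv_delta mxE !eqxx.
  have eu : dotv e u = 0 by rewrite dotv_delta mxE (negPf ji).
  have uv : dotv u v = 1 by rewrite /v dotvDr dotvZr uu ue mulr0 addr0.
  have vv : dotv v v = 1 + t ^+ 2.
    by rewrite /v !dotvDl !dotvDr !dotvZl !dotvZr uu ue ee eu; ring.
  have Cuu : dotv u (C *m u) = C i i by rewrite dotv_deltaE.
  have Cvu : dotv v (C *m u) = C i i + t * C j i.
    by rewrite /v dotvDl dotvZl !dotv_deltaE.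
  have Cvv : dotv v (C *m v) = C i i + t * C i j + t * (C j i + t * C j j).
    rewrite /v mulmxDr -scalemxAr !dotvDl !dotvDr !dotvZl !dotvZr !dotv_deltaE; ring.
  rewrite uu uv vv Cuu Cvu Cvv.
  have t0 : 0 < 1 + t ^+ 2 by rewrite ltr_pwDl ?sqr_ge0.
  set k := 2 / (1 + t ^+ 2).
  have k0 : 0 < k by rewrite divr_gt0.
  have -> : \tr C - 2 / 1 * C i i - k * (C i i + t * C i j + t * (C j i + t * C j j)) +
      2 / 1 * k * (1 * (C i i + t * C j i)) =
      \tr C - k * (t * (C i j - C j i) + t ^+ 2 * (C i i + C j j)).
    rewrite /k; field; by rewrite gt_eqF.
  move=> h.
  have : 0 <= k * (t * (C i j - C j i) + t ^+ 2 * (C i i + C j j)) by lra.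
  by rewrite pmulr_rge0.
split => // x.
by have := qC x; rewrite /dotv mulmxA.
Qed.

End Max3.
Section Fin.
Variable R : realType.

Lemma quad_derive (a c : R) :
  is_derive (0 : R) (1 : R) (fun t : R => a + t ^+ 2 * c) 0.
Proof.
have -> : (fun t : R => a + t ^+ 2 * c) = horner (a%:P + c *: 'X^2).
  by apply: funext => t; rewrite hornerD hornerC hornerZ hornerXn mulrC.
apply: is_derive_eq (is_derive_poly _ _) _.
by rewrite derivD derivC derivZ derivXn !hornerE.
Qed.

Lemma expand_f d K (M : 'M[R]_d) (D : 'M[R]_K) (X V : 'M[R]_(d, K)) (t : R) :
  \tr ((X + t *: V)^T *m M *m (X + t *: V) *m D) =
  \tr (X^T *m M *m X *m D) + t * (\tr (X^T *m M *m V *m D) + \tr (V^T *m M *m X *m D))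
  + t ^+ 2 * \tr (V^T *m M *m V *m D).
Proof.
rewrite [(X + t *: V)^T]linearD /=.
have -> : (t *: V)^T = t *: V^T by apply/matrixP => i j; rewrite !mxE.
rewrite !mulmxDl !mulmxDr !mulmxDl -!scalemxAl -!scalemxAr -!scalemxAl.
rewrite !mxtraceD !mxtraceZ.
ring.
Qed.

Lemma tr_swap d K (M : 'M[R]_d) (D : 'M[R]_K) (X V : 'M[R]_(d, K)) :
  M^T = M -> D^T = D -> \tr (X^T *m M *m V *m D) = \tr (V^T *m M *m X *m D).
Proof.
move=> Mt Dt.
rewrite -[LHS]mxtrace_tr !trmx_mul trmxK Dt Mt.
by rewrite mxtrace_mulC !mulmxA.
Qed.

End Fin.
Theorem lemma7 (R : realType) (d K : nat) (hK : (1 <= K)%N) (hdK : (K < d)%N)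
  (Q : 'M[R]_(d, K)) (hQ : Stiefel Q)
  (lam a : 'rV[R]_K)
  (hlam_dec : forall i j : 'I_K, (i < j)%N -> lam 0 j < lam 0 i)
  (hlam_pos : forall i : 'I_K, 0 < lam 0 i)
  (ha_dec : forall i j : 'I_K, (i < j)%N -> a 0 j < a 0 i)
  (ha_pos : forall i : 'I_K, 0 < a 0 i)
  (alpha : R) (halpha : 0 < alpha) :
  let Theta := diag_mx (\row_i Num.sqrt (lam 0 i)) in
  let M := Q *m (Theta *m Theta) *m Q^T in
  let A := fun X : 'M[R]_(d, K) => alpha *: X + M *m X *m diag_mx a in
  let f := fun X : 'M[R]_(d, K) => \tr (X^T *m M *m X *m diag_mx a) in
  forall X : 'M[R]_(d, K), Stiefel X ->
    (P_St (A X) X <-> \tr (X^T *m A X) = nucnorm (A X)) /\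
    (P_St (A X) X -> critical_St f X).
Proof.
move=> Theta M A f X hX.
have Mt : M^T = M by rewrite /M !trmx_mul trmxK tr_diag_mx mulmxA.
clearbody M.
set D := diag_mx a.
have Dt : D^T = D by rewrite /D tr_diag_mx.
set Y := A X.
have Pmax : P_St Y X <->
    (forall Z, Stiefel Z -> \tr (Z^T *m Y) <= \tr (X^T *m Y)).
  split.
    by case=> _ H Z hZ; rewrite -(frob_le _ hX hZ); exact: H.
  by move=> H; split => // Z hZ; rewrite (frob_le _ hX hZ); exact: H.
pose S := get [set S : 'M[R]_K | psd S /\ S *m S = Y^T *m Y].
have hS : psd S /\ S *m S = Y^T *m Y.
  by have := @getPex _ [set S : 'M[R]_K | psd S /\ S *m S = Y^T *m Y] (psd_sqrt_ex Y).
have nucS : nucnorm Y = \tr S by [].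
split; [split|].
- move/Pmax => H; have [hY hC] := max_struct hX H.
  rewrite nucS; set C := X^T *m Y in hY hC *.
  have [CT _] := hC.
  suff -> : S = C by [].
  apply: psd_sqrt_uniq hS.1 hC _.
  rewrite hS.2 {1 2}hY trmx_mul -mulmxA (mulmxA X^T) hX mul1mx CT.
  by [].
- move=> htr; apply/Pmax => Z hZ; rewrite htr nucS.
  exact: tr_le_nuc hS.1 hS.2 hZ.
- move/Pmax => H; have [hY [CT _]] := max_struct hX H.
  split => //; split.
    by rewrite /tangent trmx0 mulmx0 mul0mx addr0.
  move=> V hV.
  rewrite trmx0 mul0mx mxtrace0.
  set C := X^T *m Y in hY CT.
  have hMXD : M *m X *m D = X *m (C - alpha%:M).
    have e : X *m C = alpha *: X + M *m X *m D by rewrite -hY.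
    by rewrite -[M *m X *m D](addKr (alpha *: X)) -e mulmxBr mul_mx_scalar addrC.
  set C' := C - alpha%:M in hMXD.
  have C'T : C'^T = C' by rewrite /C' linearB /= CT tr_scalar_mx.
  have h1 : \tr (X^T *m M *m V *m D) = \tr (V^T *m M *m X *m D).
    exact: tr_swap.
  have h2 : \tr (V^T *m M *m X *m D) = 0.
    rewrite -!mulmxA (mulmxA M) hMXD mulmxA.
    have hVX : V^T *m X = - (X^T *m V).
      by apply/eqP; rewrite -addr_eq0 addrC; apply/eqP; exact: hV.
    have : \tr (V^T *m X *m C') = - \tr (V^T *m X *m C').
      rewrite {1}hVX -mxtrace_tr trmx_mul C'T linearN /= trmx_mul trmxK.
      by rewrite mulmxN linearN /= mxtrace_mulC.
    move=> h; lra.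
  have -> : (fun t : R => f (X + t *: V)) =
      (fun t : R => f X + t ^+ 2 * \tr (V^T *m M *m V *m D)).
    apply: funext => t; rewrite /f -/D expand_f h1 h2 addr0 mulr0 addr0.
    by [].
  exact: quad_derive.
Qed.
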